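(* For every integer $r\ge1$, let $\mathcal{REP}_r$ be the category of finite-dimensional modules over the polynomial algebra $\Bbbk[x_1,\dots,x_r]$. Then $\mathrm{fpdim}(\mathcal{REP}_r)=r$.
   Context: $\Bbbk$ is algebraically closed. For a $\Bbbk$-linear abelian category $\mathcal C$: a brick is an object $M$ with $\mathrm{Hom}_{\mathcal C}(M,M)=\Bbbk$; a brick set is a finite set $\phi=\{X_1,\dots,X_n\}$ of bricks with $\dim\mathrm{Hom}_{\mathcal C}(X_i,X_j)=\delta_{ij}$; its adjacency matrix is $C(\phi)=(\dim\mathrm{Ext}^1_{\mathcal C}(X_i,X_j))_{i,j}$; $\mathrm{fpdim}(\mathcal C)=\sup\{\rho(C(\phi)):\phi\text{ a brick set}\}$, $\rho$ the spectral radius. *)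

(* Defs.v *)
From HB Require Import structures.
From mathcomp Require Import all_boot all_order all_algebra all_field.
Set Implicit Arguments. Unset Strict Implicit. Unset Printing Implicit Defensive.
Import Order.TTheory GRing.Theory Num.Theory.
Local Open Scope ring_scope.

(* A finite-dimensional module over k[x_1,...,x_r]: the space of row vectors
   'rV[k]_dimv, with x_i acting on the right by the matrix act i; the
   actions pairwise commute. *)
Record fdmod (k : fieldType) (r : nat) := FDMod {
  dimv : nat;
  act : 'I_r -> 'M[k]_dimv;
  act_comm : forall i j, act i *m act j = act j *m act i }.

Section FDMod.
Variables (k : fieldType) (r : nat).

(* Hom(M,N): matrices X with v |-> v X a module map, i.e. A_i X = X B_i. *)
Definition homdim (M N : fdmod k r) : nat :=
  \rank (\bigcap_(i < r)
     kermx (lin_mx (fun X : 'M[k]_(dimv M, dimv N) => act M i *m X - X *m act N i)))%MS.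

(* Ext^1(M,N): extensions 0 -> N -> E -> M -> 0, E = rows [u_N, v_M] with
   x_i acting by block matrix [[B_i, 0], [D_i, A_i]].  Cocycles: tuples
   (D_i) (stored as rows mxvec D_i of a r x (n*m) matrix) making these block
   matrices commute; coboundaries: D_i = A_i X - X B_i. *)
Definition ext_cocycle_map (M N : fdmod k r) (p : 'I_r * 'I_r) :=
  lin_mx (fun T : 'M[k]_(r, dimv M * dimv N) =>
    let D i := vec_mx (row i T) : 'M[k]_(dimv M, dimv N) in
    (D p.1 *m act N p.2 + act M p.1 *m D p.2)
    - (D p.2 *m act N p.1 + act M p.2 *m D p.1)).

Definition ext_cocycles (M N : fdmod k r) :=
  (\bigcap_(p : 'I_r * 'I_r) kermx (ext_cocycle_map M N p))%MS.

Definition ext_coboundaries (M N : fdmod k r) :=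
  lin_mx (fun X : 'M[k]_(dimv M, dimv N) =>
    \matrix_(i < r) mxvec (act M i *m X - X *m act N i)).

Definition extdim (M N : fdmod k r) : nat :=
  (\rank (ext_cocycles M N) - \rank (ext_coboundaries M N))%N.

Definition brick_set (s : nat) (phi : 'I_s -> fdmod k r) : Prop :=
  forall i j, homdim (phi i) (phi j) = (i == j : nat).

Definition adjacency (s : nat) (phi : 'I_s -> fdmod k r) : 'M[algC]_s :=
  \matrix_(i, j) (extdim (phi i) (phi j))%:R.
End FDMod.

Definition eigenvalues (s : nat) (A : 'M[algC]_s) : seq algC :=
  sval (closed_field_poly_normal (char_poly A)).

Definition spectral_radius (s : nat) (A : 'M[algC]_s) : algC :=
  \big[Num.max/0]_(z <- eigenvalues A) `|z|.

Definition fpdim_is (k : fieldType) (r : nat) (d : algC) : Prop :=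
  (forall s (phi : 'I_s -> fdmod k r), brick_set phi ->
      spectral_radius (adjacency phi) <= d) /\
  (forall x : algC, x < d ->
      exists s (phi : 'I_s -> fdmod k r),
        brick_set phi /\ x < spectral_radius (adjacency phi)).

(* Main.v *)
From HB Require Import structures.
From mathcomp Require Import all_boot all_order all_algebra all_field.
Require Import Defs.
From mathcomp Require Import ring.
Import Order.TTheory GRing.Theory Num.Theory.
Local Open Scope ring_scope.

Lemma mul_vec_linP (R : comNzRingType) m1 n1 m2 n2 (f : 'M[R]_(m1,n1) -> 'M[R]_(m2,n2)) :
  (forall a A B, f (a *: A + B) = a *: f A + f B) -> forall A, mxvec A *m lin_mx f = mxvec (f A).
Proof.
move=> Hf A.
pose g : {linear 'M[R]_(m1,n1) -> 'M[R]_(m2,n2)} := HB.pack f (GRing.isLinear.Build _ _ _ _ f Hf).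
exact: (mul_vec_lin g).
Qed.

Lemma lin_mx0 (R : comNzRingType) m1 n1 m2 n2 (f : 'M[R]_(m1,n1) -> 'M[R]_(m2,n2)) :
  (forall A, f A = 0) -> lin_mx f = 0.
Proof. by move=> H; apply/matrixP => i j; rewrite /lin_mx /lin1_mx mxE /= H linear0 !mxE. Qed.

Arguments mul_vec_linP {R m1 n1 m2 n2 f}.
Section Mods.
Variables (k : fieldType) (r : nat).

Lemma homlin m n (A : 'M[k]_m) (B : 'M[k]_n) a X Y :
  A *m (a *: X + Y) - (a *: X + Y) *m B = a *: (A *m X - X *m B) + (A *m Y - Y *m B).
Proof.
by rewrite mulmxDr mulmxDl -scalemxAr -scalemxAl scalerBr opprD addrACA.
Qed.


Lemma brick_dim1 (M : fdmod k r) : homdim M M = 1%N -> dimv M = 1%N.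
Proof.
case: M => n A Acomm /=; rewrite /homdim /=.
set S := (\bigcap_(i < r) _)%MS => HS.
have [allsc | ] := boolP [forall i, is_scalar_mx (A i)].
  have : (1%:M <= S)%MS.
    apply/sub_bigcapmxP => i _; rewrite lin_mx0; first by apply/sub_kermxP; rewrite mulmx0.
    move=> X; have /forallP/(_ i)/is_scalar_mxP[a ->] := allsc.
    by rewrite mul_scalar_mx mul_mx_scalar subrr.
  move/mxrankS; rewrite mxrank1 HS => Hle; have := rank_leq_col S; rewrite HS => Hge.
  by case: n {A Acomm S HS allsc} Hle Hge => [|[|n]].
move=> /forallPn[i nsc].
have Hin X : (forall j, A j *m X = X *m A j) -> (mxvec X <= S)%MS.
  move=> HX; apply/sub_bigcapmxP => j _; apply/sub_kermxP.
  by rewrite (mul_vec_linP (@homlin _ _ (A j) (A j))) HX subrr linear0.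
have H1 : (mxvec (1%:M : 'M[k]_n) <= S)%MS by apply: Hin => j; rewrite mul1mx mulmx1.
have H2 : (mxvec (A i) <= S)%MS by apply: Hin.
have gen : forall m (B : 'M[k]_m), ~~ is_scalar_mx B -> (0 < m)%N.
  move=> [|m] // B; case/is_scalar_mxP; by exists 0; apply/matrixP => -[].
have n0 := gen _ _ nsc.
have nz : mxvec (1%:M : 'M[k]_n) != 0.
  apply/eqP => /(congr1 vec_mx); rewrite mxvecK linear0 => /matrixP /(_ (Ordinal n0) (Ordinal n0)).
  by rewrite !mxE eqxx /= => /eqP; rewrite oner_eq0.
have : (mxvec (1%:M : 'M[k]_n) == S)%MS.
  by rewrite -(mxrank_leqif_eq H1) rank_rV nz HS.
case/andP => _ /(submx_trans H2) /sub_rVP[a Ha].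
move: nsc; rewrite -[A i]mxvecK Ha -linearZ /= mxvecK scalemx1.
by case/is_scalar_mxP; exists a.
Qed.


Lemma dim1_rep (M : fdmod k r) : dimv M = 1%N ->
  exists A (cA : forall i j, A i *m A j = A j *m A i), M = @FDMod k r 1 A cA.
Proof. by case: M => n A cA /= E; subst n; exists A, cA. Qed.

Lemma comm11 (a X : 'M[k]_1) : a *m X = X *m a.
Proof. by rewrite [a]mx11_scalar mul_mx_scalar mul_scalar_mx. Qed.

Lemma hom_full (A B : 'I_r -> 'M[k]_1) cA cB : (forall i, A i = B i) ->
  homdim (@FDMod k r 1 A cA) (@FDMod k r 1 B cB) = 1%N.
Proof.
move=> AB; rewrite /homdim /=.
set S := (\bigcap_(i < r) _)%MS.
have : (1%:M <= S)%MS.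
  apply/sub_bigcapmxP => i _; rewrite lin_mx0; first by apply/sub_kermxP; rewrite mulmx0.
  by move=> X; rewrite AB comm11 subrr.
move/mxrankS; rewrite mxrank1 => Hle; have := rank_leq_col S => Hge.
by apply/eqP; rewrite eqn_leq Hle Hge.
Qed.

Lemma hom0_diff (A B : 'I_r -> 'M[k]_1) cA cB :
  homdim (@FDMod k r 1 A cA) (@FDMod k r 1 B cB) = 0%N -> exists i, A i 0 0 != B i 0 0.
Proof.
have [/forallP H|/forallPn//] := boolP [forall i, A i 0 0 == B i 0 0].
rewrite hom_full // => i; rewrite [A i]mx11_scalar [B i]mx11_scalar.
by rewrite (eqP (H i)).
Qed.

Lemma ext_same (A : 'I_r -> 'M[k]_1) cA :
  extdim (@FDMod k r 1 A cA) (@FDMod k r 1 A cA) = r.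
Proof.
rewrite /extdim /ext_coboundaries /=.
rewrite lin_mx0 ?mxrank0 ?subn0; last first.
  move=> X; apply/matrixP => i j; rewrite mxE comm11 subrr linear0 !mxE //.
rewrite /ext_cocycles /ext_cocycle_map /=.
set S := (\bigcap_(p : 'I_r * 'I_r) _)%MS.
have : (1%:M <= S)%MS.
  apply/sub_bigcapmxP => p _; rewrite lin_mx0; first by apply/sub_kermxP; rewrite mulmx0.
  move=> T /=; rewrite (comm11 (A p.1)) (comm11 (A p.2)).
  by rewrite [X in X - _]addrC subrr.
move/mxrankS; rewrite mxrank1 => Hle; have := rank_leq_col S => Hge.
move: (\rank S) Hle Hge => x; rewrite !muln1 => Hle Hge.
by apply/eqP; rewrite eqn_leq Hle Hge.
Qed.

Lemma idx11 (l : 'I_(1*1)) : l = ord0.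
Proof. by apply/val_inj; case: l => -[]. Qed.

Lemma ext_diff (A B : 'I_r -> 'M[k]_1) cA cB i0 : A i0 0 0 != B i0 0 0 ->
  extdim (@FDMod k r 1 A cA) (@FDMod k r 1 B cB) = 0%N.
Proof.
move=> Hd; rewrite /extdim; apply/eqP; rewrite subn_eq0.
apply: (@leq_trans 1).
  pose W : 'M[k]_(r, 1*1) := \matrix_(j, l) (A j 0 0 - B j 0 0).
  apply: (leq_trans _ (rank_leq_row (mxvec W))); apply: mxrankS.
  apply/rV_subP => v Hv.
  pose T := vec_mx v.
  have HT : forall j, T j ord0 * (A i0 0 0 - B i0 0 0) = T i0 ord0 * (A j 0 0 - B j 0 0).
    move=> j; move/sub_bigcapmxP: Hv => /(_ (i0, j) isT) /sub_kermxP.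
    rewrite -[v]vec_mxK /ext_cocycle_map (mul_vec_linP); last first.
      move=> a X Y; apply/matrixP => x y; rewrite !mxE /= !big_ord1 !mxE.
      rewrite !(idx11 (mxvec_index _ _)) !(idx11 y) !ord1; ring.
    move/(congr1 vec_mx); rewrite mxvecK linear0 => /matrixP /(_ 0 0).
    rewrite !mxE /= !big_ord1 !mxE !(idx11 (mxvec_index _ _)) -/T => E.
    apply/eqP; rewrite -subr_eq0; apply/eqP; rewrite -E; ring.
  have Hab : A i0 0 0 - B i0 0 0 != 0 by rewrite subr_eq0.
  have -> : v = (T i0 ord0 / (A i0 0 0 - B i0 0 0)) *: mxvec W.
    rewrite -linearZ /=; rewrite -[v]vec_mxK -/T; congr mxvec.
    apply/matrixP => j l; rewrite !mxE (idx11 l).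
    apply: (mulIf Hab); have := HT j; rewrite !mxE => ->; field; exact: Hab.
  exact: scalemx_sub.
rewrite lt0n mxrank_eq0; apply/eqP => Z.
pose g := (fun X : 'M[k]_1 => \matrix_(i < r) mxvec (A i *m X - X *m B i) : 'M_(r, 1*1)).
have Hg : forall a X Y, g (a *: X + Y) = a *: g X + g Y.
  move=> a X Y; apply/matrixP => x y; rewrite !mxE homlin linearP /= !mxE //.
have := @mul_vec_linP _ _ _ _ _ g Hg 1%:M.
rewrite /ext_coboundaries /= in Z; rewrite Z mulmx0 => /esym /(congr1 vec_mx); rewrite mxvecK linear0.
move=> /matrixP /(_ i0 (mxvec_index 0 0)); rewrite !mxE mxvecE mulmx1 mul1mx !mxE.
by move/eqP; rewrite subr_eq0 (negbTE Hd).
Qed.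


Lemma adjacency_brick s (phi : 'I_s -> fdmod k r) : brick_set phi ->
  adjacency phi = (r%:R : algC)%:M.
Proof.
move=> Hb; apply/matrixP => i j; rewrite !mxE.
have dim1 l : dimv (phi l) = 1%N by apply: brick_dim1; rewrite Hb eqxx.
have [A [cA EA]] := @dim1_rep (phi i) (dim1 i).
case: (eqVneq i j) => [<-|ne].
  by rewrite EA ext_same mulr1n.
have [B [cB EB]] := @dim1_rep (phi j) (dim1 j).
move: (Hb i j); rewrite EA EB (negbTE ne) => /hom0_diff [i0 Hi0].
by rewrite (@ext_diff A B cA cB i0 Hi0) mulr0n.
Qed.

End Mods.
Lemma char_poly_scalar' (R : comNzRingType) s (c : R) : char_poly (c%:M : 'M_s) = ('X - c%:P) ^+ s.
Proof.
rewrite /char_poly /char_poly_mx map_scalar_mx -(raddfB (@scalar_mx _ s)) det_scalar //.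
Qed.

Lemma eig_scalar s (c : algC) : eigenvalues (c%:M : 'M_s) = nseq s c.
Proof.
rewrite /eigenvalues; case: closed_field_poly_normal => l /=.
rewrite char_poly_scalar' lead_coef_exp lead_coefXsubC expr1n scale1r => E.
have Hsz : size l = s.
  by have := congr1 (fun p : {poly algC} => size p) E; rewrite size_exp_XsubC size_prod_XsubC => -[].
have Hall : all (pred1 c) l.
  apply/allP => z zl /=; have := root_prod_XsubC l z; rewrite -E zl.
  rewrite rootE horner_exp hornerXsubC expf_eq0 subr_eq0 => /andP[_ /eqP->] //.
by rewrite -Hsz; apply/all_pred1P.
Qed.

Lemma spec_scalar s (c : algC) : 0 <= c -> spectral_radius (c%:M : 'M_s) = if s is 0 then 0 else c.
Proof.
move=> c0; rewrite /spectral_radius eig_scalar.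
elim: s => [|s IH]; first by rewrite big_nil.
rewrite /= big_cons IH ger0_norm //; case: s {IH} => [|s].
  by rewrite /Num.max (le_gtF c0).
by rewrite /Num.max ltxx.
Qed.

Theorem corollary7p5 (k : closedFieldType) (r : nat) :
  (1 <= r)%N -> fpdim_is k r r%:R.
Proof.
move=> r1; split.
  move=> s phi Hb; rewrite adjacency_brick // spec_scalar ?ler0n //.
  by case: s {phi Hb}.
move=> x Hx.
pose M0 := @FDMod k r 1 (fun _ => 0) (fun _ _ => erefl).
have Hb : brick_set (fun _ : 'I_1 => M0).
  by move=> i j; rewrite !ord1 eqxx hom_full.
exists 1%N, (fun _ => M0); split => //.
by rewrite adjacency_brick // spec_scalar ?ler0n.
Qed.
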